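(* Let $\mathcal{R},\mathcal{R}'$ be finite sets with $|\mathcal{R}|=|\mathcal{R}'|$, let $\mathcal{A}$ be a finite set of attributes, for each $a\in\mathcal{A}$ let $\mathcal{V}_a=\mathcal{V}'_a$ be a finite set and $A_a$ a transition probability matrix on $\mathcal{V}_a$ with positive entries, and let $\mathcal{V}=\mathcal{V}'=\prod_{a\in\mathcal{A}}\mathcal{V}_a$. Then the PRAM mechanism with per-attribute transition matrices $A_a$ is a $Pk$-anonymization for $$k=1+(|\mathcal{R}|-1)\prod_{a\in\mathcal{A}}\mathrm{AR}_a,\qquad \mathrm{AR}_a=\min_{u,v\in\mathcal{V}_a,\ u',v'\in\mathcal{V}'_a}\frac{(A_a)_{u,v'}(A_a)_{v,u'}}{(A_a)_{u,u'}(A_a)_{v,v'}}.$$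
   Context: A table on $(\mathcal{R},\mathcal{V})$ is a map $\mathcal{R}\to\mathcal{V}$; $\mathcal{T}$, $\mathcal{T}'$ denote the sets of tables on $(\mathcal{R},\mathcal{V})$ and $(\mathcal{R}',\mathcal{V}')$. For sets $X,Y$, $X\to Y$ is the set of maps $X\to Y$. A privacy mechanism is $(\mathcal{R},\mathcal{V},\mathcal{R}',\mathcal{V}',\Pi,\Delta)$ with $\Pi$ uniformly distributed over bijections $\mathcal{R}\to\mathcal{R}'$ and $\Delta$ a random variable in $\mathcal{T}\to(\mathcal{R}\to\mathcal{V}')$; it is a privacy mechanism from $T$ to $T'$ if $T,\Pi,\Delta$ are mutually independent and $\Delta(T)=T'\circ\Pi$. A transition probability matrix has nonnegative entries and rows summing to 1. The PRAM mechanism with per-attribute matrices $A_a$: for every $\tau\in\mathcal{T}$, the values $(\Delta(\tau))(r)$, $r\in\mathcal{R}$, are independent and $\Pr[(\Delta(\tau))(r)=v']=\prod_{a\in\mathcal{A}}(A_a)_{\tau(r)_a,v'_a}$, where $w_a$ denotes the $a$-component of $w\in\prod_a\mathcal{V}_a$. $(\Delta,\tau')$ is $Pk$-anonymous if for all random variables $T,T'$ such that $\Delta$ is a privacy mechanism from $T$ to $T'$ and all $r\in\mathcal{R},r'\in\mathcal{R}'$, $\Pr[\Pi(r)=r'\mid T'=\tau']\le1/k$; $\Delta$ is a $Pk$-anonymization if $(\Delta,\tau')$ is $Pk$-anonymous for every $\tau'\in\mathcal{T}'$ for which some $\tau\in\mathcal{T}$ has $\Pr[\Delta(\tau)=\tau'\circ\Pi]\ne0$.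 *)

(* Defs.v *)
From HB Require Import structures.
From mathcomp Require Import all_boot all_order all_algebra.
From mathcomp Require Import all_classical all_reals.
From mathcomp Require Import measure probability.
Set Implicit Arguments. Unset Strict Implicit. Unset Printing Implicit Defensive.
Import Order.TTheory GRing.Theory Num.Theory.
Local Open Scope classical_set_scope.
Local Open Scope ring_scope.

Section PRAM.
Context {R : realType} {d : measure_display} {Omega : measurableType d}.
Variable P : probability Omega R.

Definition Pr (E : set Omega) : R := fine (P E).

(** conditional probability Pr[E | F] := Pr[E /\ F] / Pr[F]
    (equals 0 when Pr[F] = 0, by MathComp's convention x / 0 = 0) *)
Definition cPr (E F : set Omega) : R := Pr (E `&` F) / Pr F.

Definition is_rv (X : finType) (Y : Omega -> X) : Prop :=
  forall x, measurable [set w | Y w = x].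

Definition indep3 (X Y Z : finType) (F : Omega -> X) (G : Omega -> Y)
    (H : Omega -> Z) : Prop :=
  forall x y z,
    Pr [set w | F w = x /\ G w = y /\ H w = z] =
    Pr [set w | F w = x] * Pr [set w | G w = y] * Pr [set w | H w = z].

Definition indep_family (I X : finType) (F : I -> Omega -> X) : Prop :=
  forall x : {ffun I -> X},
    Pr [set w | forall i, F i w = x i] = \prod_(i : I) Pr [set w | F i w = x i].

End PRAM.

Definition is_bij (X Y : finType) (f : {ffun X -> Y}) : bool :=
  injectiveb f && [forall y, exists x, f x == y].

Definition transition {R : realType} (V : finType) (M : V -> V -> R) : Prop :=
  (forall u v, 0 <= M u v) /\ (forall u, \sum_(v : V) M u v = 1).

Notation value Va := {dffun forall a, Va a}.
Notation table Rr V := {ffun Rr -> V}.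

Section Mech.
Context {R : realType} {d : measure_display} {Omega : measurableType d}.
Variable P : probability Omega R.
Variables (Rr V Rr' V' : finType).
Variable Pi : Omega -> {ffun Rr -> Rr'}.
Variable Delta : Omega -> {ffun table Rr V -> {ffun Rr -> V'}}.

Definition privacy_mechanism : Prop :=
  is_rv Pi /\ is_rv Delta /\
  forall pi : {ffun Rr -> Rr'},
    Pr P [set w | Pi w = pi] =
      if is_bij pi then (#|[pred f : {ffun Rr -> Rr'} | is_bij f]|%:R)^-1 else 0.

Definition compPi (tau' : table Rr' V') (w : Omega) : {ffun Rr -> V'} :=
  [ffun r => tau' (Pi w r)].

Definition mechanism_from (T : Omega -> table Rr V) (T' : Omega -> table Rr' V') : Prop :=
  indep3 P T Pi Delta /\ forall w, Delta w (T w) = compPi (T' w) w.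

Definition Pk_anonymous (k : R) (tau' : table Rr' V') : Prop :=
  forall (T : Omega -> table Rr V) (T' : Omega -> table Rr' V'),
    is_rv T -> is_rv T' -> mechanism_from T T' ->
    forall (r : Rr) (r' : Rr'),
      cPr P [set w | Pi w r = r'] [set w | T' w = tau'] <= k^-1.

Definition Pk_anonymization (k : R) : Prop :=
  forall tau' : table Rr' V',
    (exists tau : table Rr V,
        Pr P [set w | Delta w tau = compPi tau' w] != 0) ->
    Pk_anonymous k tau'.
End Mech.

Definition is_PRAM {R : realType} {d : measure_display} {Omega : measurableType d}
    (P : probability Omega R) (Rr Att : finType) (Va : Att -> finType)
    (A : forall a : Att, Va a -> Va a -> R)
    (Delta : Omega -> {ffun table Rr (value Va) -> {ffun Rr -> value Va}}) : Prop :=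
  forall tau : table Rr (value Va),
    indep_family P (fun r w => Delta w tau r) /\
    forall (r : Rr) (v' : value Va),
      Pr P [set w | Delta w tau r = v'] = \prod_(a : Att) A a (tau r a) (v' a).

(** Taken as a big min with neutral element 1; since the term u = v, u' = v'
    equals 1 (for positive entries), this is the true minimum whenever Va a is
    nonempty. *)
Definition AR {R : realType} (V : finType) (M : V -> V -> R) : R :=
  \big[Order.min/1]_(u : V) \big[Order.min/1]_(v : V)
   \big[Order.min/1]_(u' : V) \big[Order.min/1]_(v' : V)
     (M u v' * M v u' / (M u u' * M v v')).

Definition PRAM_k {R : realType} (Rr Att : finType) (Va : Att -> finType)
    (A : forall a : Att, Va a -> Va a -> R) : R :=
  1 + (#|Rr|%:R - 1) * \prod_(a : Att) AR (A a).

(* Main.v *)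
Require Import Defs.
From HB Require Import structures.
From mathcomp Require Import all_boot all_order all_algebra.
From mathcomp Require Import all_classical all_reals.
From mathcomp Require Import measure probability.
From mathcomp Require Import lra ring.
Import Order.TTheory GRing.Theory Num.Theory.
Local Open Scope classical_set_scope.
Local Open Scope ring_scope.

Section ProbLemmas.
Context {R : realType} {d : measure_display} {Omega : measurableType d}.
Variable P : probability Omega R.

Lemma Pr_ge0 (A : set Omega) : 0 <= Pr P A.
Proof. by apply: fine_ge0; apply: measure_ge0. Qed.

Lemma PrU (A B : set Omega) : measurable A -> measurable B -> A `&` B = set0 ->
  Pr P (A `|` B) = Pr P A + Pr P B.
Proof.
move=> mA mB AB; rewrite /Pr measureU // fineD //; exact: fin_num_measure.
Qed.

Lemma Pr_eq_off (N E1 E2 : set Omega) : measurable N -> measurable E1 ->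
  measurable E2 -> Pr P N = 0 -> (forall w, ~ N w -> (E1 w <-> E2 w)) ->
  Pr P E1 = Pr P E2.
Proof.
move=> mN m1 m2 PN H.
have key : forall E, measurable E -> Pr P E = Pr P (E `&` ~` N).
  move=> E mE.
  have h1 : Pr P N = Pr P (E `&` N) + Pr P (N `&` ~` E).
    rewrite -PrU; [|exact: measurableI|apply: measurableI => //; exact: measurableC|].
      congr Pr; apply/seteqP; split => w /=.
        by move=> Nw; have [Ew|nEw] := pselect (E w); [left|right].
      by case=> -[].
    by apply/seteqP; split => w //= [[? ?] [? ?]].
  have h0 : Pr P (E `&` N) = 0.
    apply/eqP; rewrite eq_le Pr_ge0 andbT.
    have := Pr_ge0 (N `&` ~` E); rewrite PN in h1; lra.
  rewrite -[RHS]add0r -h0 -PrU; [|exact: measurableI|apply: measurableI => //; exact: measurableC|].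
    congr Pr; apply/seteqP; split => w /=.
      by move=> Ew; have [Nw|nNw] := pselect (N w); [left|right].
    by case=> -[].
  by apply/seteqP; split => w //= [[? ?] [? ?]].
rewrite (key _ m1) (key _ m2); congr Pr; apply/seteqP; split => w /= [Ew nN];
  split => //; by apply/(H _ nN).
Qed.

Section RV.
Variables (K : finType) (X : Omega -> K).
Hypothesis hX : forall x, measurable [set w | X w = x].

Lemma setQ (Q : pred K) x :
  [set w | X w = x /\ Q x] = if Q x then [set w | X w = x] else set0.
Proof. by case: (Q x); apply/seteqP; split => w /= //; case. Qed.

Lemma meas_seq (Q : pred K) (s : seq K) :
  measurable [set w | (X w \in s) && Q (X w)].
Proof.
elim: s => [|x s IH].
  by have -> : [set w | (X w \in [::]) && Q (X w)] = set0 by apply/seteqP; split => w.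
have -> : [set w | (X w \in x :: s) && Q (X w)] =
   [set w | X w = x /\ Q x] `|` [set w | (X w \in s) && Q (X w)].
  apply/seteqP; split => w /=; rewrite inE.
    by case/andP => /orP [/eqP ->|Hs] HQ; [left|right; rewrite Hs].
  by case=> [[-> ->]|/andP [-> ->]]; rewrite ?eqxx ?orbT.
apply: measurableU => //; rewrite setQ; by case: (Q x).
Qed.

Lemma meas_pred (Q : pred K) : measurable [set w | Q (X w)].
Proof.
have -> : [set w | Q (X w)] = [set w | (X w \in enum K) && Q (X w)].
  by apply/seteqP; split => w /=; rewrite mem_enum.
exact: meas_seq.
Qed.

Lemma Pr_seq (Q : pred K) (s : seq K) : uniq s ->
  Pr P [set w | (X w \in s) && Q (X w)] = \sum_(x <- s | Q x) Pr P [set w | X w = x].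
Proof.
elim: s => [|x s IH] /=.
  move=> _; rewrite big_nil.
  have -> : [set w | (X w \in [::]) && Q (X w)] = set0 by apply/seteqP; split => w.
  by rewrite /Pr measure0.
case/andP => xs us; rewrite big_cons -IH //.
have -> : [set w | (X w \in x :: s) && Q (X w)] =
   [set w | X w = x /\ Q x] `|` [set w | (X w \in s) && Q (X w)].
  apply/seteqP; split => w /=; rewrite inE.
    by case/andP => /orP [/eqP ->|Hs] HQ; [left|right; rewrite Hs].
  by case=> [[-> ->]|/andP [-> ->]]; rewrite ?eqxx ?orbT.
rewrite PrU; last 3 first.
- by rewrite setQ; case: (Q x).
- exact: meas_seq.
- by apply/seteqP; split => w //= [[Xw _] /andP [Hs _]]; move: xs; rewrite -Xw Hs.
rewrite setQ; case: (Q x) => //.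
by rewrite /Pr measure0 add0r.
Qed.

Lemma Pr_sum (Q : pred K) :
  Pr P [set w | Q (X w)] = \sum_(x | Q x) Pr P [set w | X w = x].
Proof.
have -> : [set w | Q (X w)] = [set w | (X w \in enum K) && Q (X w)].
  by apply/seteqP; split => w /=; rewrite mem_enum.
by rewrite Pr_seq ?enum_uniq // big_enum_cond.
Qed.
End RV.
End ProbLemmas.

Set Implicit Arguments. Unset Strict Implicit. Unset Printing Implicit Defensive.
Set Implicit Arguments. Unset Strict Implicit. Unset Printing Implicit Defensive.

Definition sw (T : eqType) (r s x : T) := if x == r then s else if x == s then r else x.

Lemma swK (T : eqType) (r s : T) : involutive (sw r s).
Proof.
move=> x; rewrite /sw.
by do ![case: eqP => //=; try move=> ->; try congruence].
Qed.

Lemma sw_r (T : eqType) (r s : T) : sw r s r = s.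
Proof. by rewrite /sw eqxx. Qed.

Lemma sw_s (T : eqType) (r s : T) : sw r s s = r.
Proof. rewrite /sw; have [->|] := eqVneq s r => //; by rewrite eqxx. Qed.

Lemma sw_other (T : eqType) (r s x : T) : x != r -> x != s -> sw r s x = x.
Proof. by rewrite /sw => /negbTE -> /negbTE ->. Qed.

Definition swapf (Rr Rr' : finType) (r : Rr) (pi : {ffun Rr -> Rr'}) (s : Rr) :
  {ffun Rr -> Rr'} := [ffun x => pi (sw r s x)].

Lemma bij_inj (X Y : finType) (f : {ffun X -> Y}) : is_bij f -> injective f.
Proof. by case/andP => /injectiveP. Qed.

Lemma bij_surj (X Y : finType) (f : {ffun X -> Y}) : is_bij f -> forall y, exists x, f x = y.
Proof. by case/andP => _ /forallP H y; have /existsP [x /eqP] := H y; exists x. Qed.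

Lemma bij_swap (Rr Rr' : finType) (r : Rr) (pi : {ffun Rr -> Rr'}) s :
  is_bij pi -> is_bij (swapf r pi s).
Proof.
move=> hb; apply/andP; split.
  apply/injectiveP => x y; rewrite !ffunE => /(bij_inj hb).
  exact: (can_inj (swK r s)).
apply/forallP => y; have [x <-] := bij_surj hb y.
by apply/existsP; exists (sw r s x); rewrite ffunE swK.
Qed.

Section Comb.
Variables (R : realType) (Rr Rr' : finType) (r : Rr) (r' : Rr').
Variables (W : {ffun Rr -> Rr'} -> R) (rho : R).
Hypothesis hW0 : forall pi, 0 <= W pi.
Hypothesis hrho : 0 <= rho.
Hypothesis hswap : forall pi s, is_bij pi -> s != r -> rho * W pi <= W (swapf r pi s).

Lemma comb_ineq :
  (1 + (#|Rr|%:R - 1) * rho) * \sum_(pi | is_bij pi && (pi r == r')) W pi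
   <= \sum_(pi | is_bij pi) W pi.
Proof.
set S1 := \sum_(pi | is_bij pi && (pi r == r')) W pi.
rewrite [X in _ <= X](bigID (fun pi : {ffun Rr -> Rr'} => pi r == r')) /= -/S1.
set S2 := \sum_(i | is_bij i && (i r != r')) W i.
suff h : (#|Rr|%:R - 1) * rho * S1 <= S2 by rewrite mulrDl mul1r lerD2l.
have -> : (#|Rr|%:R - 1) * rho * S1 =
    \sum_(pi | is_bij pi && (pi r == r')) \sum_(s | s != r) rho * W pi.
  rewrite mulrC big_distrl /=; apply: eq_bigr => pi _.
  have n0 : (0 < #|Rr|)%N by apply/card_gt0P; exists r.
  rewrite sumr_const cardC1 -(prednK n0) -natr1 addrK -mulr_natr; ring.
apply: (@le_trans _ _ (\sum_(pi | is_bij pi && (pi r == r')) \sum_(s | s != r) W (swapf r pi s))).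
  apply: ler_sum => pi /andP [hb _]; apply: ler_sum => s hs; exact: hswap.
rewrite pair_big_dep /=.
rewrite (partition_big (fun p => swapf r p.1 p.2) (fun y => is_bij y && (y r != r'))) /=; last first.
  move=> [pi s] /= /andP [/andP [hb /eqP hr] hs]; rewrite bij_swap //= ffunE sw_r.
  by rewrite -hr; apply/eqP => /(bij_inj hb) /eqP; rewrite (negbTE hs).
apply: ler_sum => y _.
case: (pickP (fun p : {ffun Rr -> Rr'} * Rr => [&& is_bij p.1, p.1 r == r', p.2 != r & swapf r p.1 p.2 == y])) => [p0 Hp0|none].
  rewrite (bigD1 p0) /=; last by move: Hp0 => /and4P [-> -> -> ->].
  rewrite big1 ?addr0; first by move: Hp0 => /and4P [_ _ _ /eqP ->].
  move=> [pi s] /= /andP [/andP [/andP [/andP [hb /eqP hr] hs] /eqP hy] hne].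
  case: p0 Hp0 hne => [pi0 s0] /and4P [/= hb0 /eqP hr0 hs0 /eqP hy0] hne.
  exfalso; move/negP: hne; apply; apply/eqP.
  have e : forall x, pi (sw r s x) = pi0 (sw r s0 x).
    by move=> x; rewrite -[LHS](ffunE (fun x => pi (sw r s x))) -[RHS](ffunE (fun x => pi0 (sw r s0 x))) -/(swapf r pi s) -/(swapf r pi0 s0) hy hy0.
  have ess : s = s0.
    have := e s0; rewrite sw_s hr0 -hr => /(bij_inj hb) /eqP.
    by move=> /eqP h; apply: (can_inj (swK r s)); rewrite h sw_s.
  subst s0; congr (_, _); apply/ffunP => x.
  by have := e (sw r s x); rewrite swK.
rewrite big_pred0 //; move=> [pi s] /=; have := none (pi, s); rewrite /= !andbA => ->.
by [].
Qed.
End Comb.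
Set Implicit Arguments. Unset Strict Implicit. Unset Printing Implicit Defensive.

Lemma bigmin_le (R : realType) (I : finType) (F : I -> R) j :
  \big[Order.min/1]_(i : I) F i <= F j.
Proof. by rewrite (bigD1 j) //= ge_min lexx. Qed.

Lemma bigmin_gt0 (R : realType) (I : finType) (F : I -> R) :
  (forall i, 0 < F i) -> 0 < \big[Order.min/1]_(i : I) F i.
Proof.
move=> h; apply: (big_ind (fun x => 0 < x)) => //.
by move=> x y hx hy; rewrite lt_min hx hy.
Qed.

Lemma AR_le (R : realType) (V : finType) (M : V -> V -> R) u v u' v' :
  AR M <= M u v' * M v u' / (M u u' * M v v').
Proof.
rewrite /AR; apply: le_trans (bigmin_le _ u) _.
apply: le_trans (bigmin_le _ v) _.
apply: le_trans (bigmin_le _ u') _.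
exact: (bigmin_le _ v').
Qed.

Lemma AR_gt0 (R : realType) (V : finType) (M : V -> V -> R) :
  (forall u v, 0 < M u v) -> 0 < AR M.
Proof.
move=> h; rewrite /AR; do 4!(apply: bigmin_gt0 => ?).
by apply: divr_gt0; apply: mulr_gt0.
Qed.

Unset Implicit Arguments.
Section Swap.
Variables (R : realType) (Rr Rr' Att : finType) (Va : Att -> finType).
Variables (A : forall a : Att, Va a -> Va a -> R).
Hypothesis hpos : forall a u v, 0 < A a u v.
Variables (tau : table Rr (value Va)) (tau' : table Rr' (value Va)).

Definition hh (x : Rr) (y : Rr') := \prod_(a : Att) A a (tau x a) (tau' y a).
Definition WW (pi : {ffun Rr -> Rr'}) := \prod_(x : Rr) hh x (pi x).

Lemma hh_gt0 x y : 0 < hh x y.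
Proof. by apply: prodr_gt0 => a _. Qed.

Lemma WW_ge0 pi : 0 <= WW pi.
Proof. by apply: prodr_ge0 => x _; apply: ltW; apply: hh_gt0. Qed.

Lemma rho_ge0 : 0 <= \prod_(a : Att) AR (A a).
Proof. by apply: prodr_ge0 => a _; apply: ltW; apply: AR_gt0. Qed.

Lemma WW_swap (r : Rr) pi s : s != r ->
  (\prod_(a : Att) AR (A a)) * WW pi <= WW (swapf r pi s).
Proof.
move=> sr; rewrite /WW (bigD1 r) //= (bigD1 s) //=.
rewrite [X in _ <= X](bigD1 r) //= [in X in _ <= X](bigD1 s) //= !ffunE sw_r sw_s.
set rest := \prod_(i | (i != r) && (i != s)) hh i (pi i).
have -> : \prod_(i | (i != r) && (i != s)) hh i (swapf r pi s i) = rest.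
  by apply: eq_bigr => i /andP [ir i_s]; rewrite ffunE sw_other.
have hr0 : 0 <= rest by apply: prodr_ge0 => i _; apply: ltW; apply: hh_gt0.
rewrite !mulrA; apply: ler_wpM2r => //.
rewrite -mulrA /hh -!big_split /=; apply: ler_prod => a _.
set u := tau r a; set v := tau s a; set u' := tau' (pi r) a; set v' := tau' (pi s) a.
have := AR_le (A a) u v u' v'.
have hd : 0 < A a u u' * A a v v' by apply: mulr_gt0.
rewrite ler_pdivlMr // => h; apply/andP; split => //.
by apply: mulr_ge0; [apply: ltW; apply: AR_gt0|apply: ltW].
Qed.
End Swap.

Unset Implicit Arguments.

Theorem corollary4 (R : realType) (d : measure_display) (Omega : measurableType d)
  (P : probability Omega R) (Rr Rr' : finType) (hcard : #|Rr| = #|Rr'|)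
  (Att : finType) (Va : Att -> finType)
  (A : forall a : Att, Va a -> Va a -> R)
  (hA : forall a, transition (A a))
  (hpos : forall a u v, 0 < A a u v)
  (Pi : Omega -> {ffun Rr -> Rr'})
  (Delta : Omega -> {ffun table Rr (value Va) -> {ffun Rr -> value Va}})
  (hmech : privacy_mechanism P Pi Delta)
  (hpram : is_PRAM P A Delta) :
  Pk_anonymization P Pi Delta (PRAM_k Rr A).
Proof.
move=> tau' _ T T' hT hT' [hind heq] r r'.
case: hmech => hPi [hDelta hunif].
set c := (#|[pred f : {ffun Rr -> Rr'} | is_bij f]|%:R)^-1 : R.
set Z := fun w => ((T w, Pi w), Delta w).
have hZ : forall z, measurable [set w | Z w = z].
  move=> [[x y] z].
  have -> : [set w | Z w = ((x, y), z)] =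
      [set w | T w = x] `&` [set w | Pi w = y] `&` [set w | Delta w = z].
    by apply/seteqP; split => w; rewrite /Z /=; [case=> -> -> ->|case=> -[-> ->] ->].
  by apply: measurableI; [apply: measurableI|]; [exact: hT|exact: hPi|exact: hDelta].
set G := fun (Qp : pred {ffun Rr -> Rr'}) (z : (table Rr (value Va) * {ffun Rr -> Rr'}) * {ffun table Rr (value Va) -> {ffun Rr -> value Va}}) =>
  [&& is_bij z.1.2, z.2 z.1.1 == [ffun s => tau' (z.1.2 s)] & Qp z.1.2].
have hcomp : forall Qp, Pr P [set w | G Qp (Z w)] =
   \sum_tau Pr P [set w | T w = tau] * \sum_(pi | is_bij pi && Qp pi) c * @WW R Rr Rr' Att Va A tau tau' pi.
  move=> Qp; rewrite (Pr_sum P _ _ hZ) big_mkcond /=.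
  have e1 : forall (I J : finType) (F : I * J -> R), \sum_z F z = \sum_i \sum_j F (i, j).
    by move=> I J F; rewrite pair_bigA; apply: eq_bigr => -[? ?].
  rewrite e1 e1.
  apply: eq_bigr => tau _; rewrite [in RHS]big_mkcond big_distrr /=; apply: eq_bigr => pi _.
  rewrite /G /=; case hb : (is_bij pi) => /=; last by rewrite mulr0 big1.
  case hq : (Qp pi) => /=; last first.
    by rewrite mulr0 big1 // => dl _; rewrite andbF.
  under eq_bigr => dl _ do rewrite andbT.
  rewrite -big_mkcond /=.
  rewrite (eq_bigr (fun dl => Pr P [set w | T w = tau] * Pr P [set w | Pi w = pi] * Pr P [set w | Delta w = dl])); last first.
    move=> dl _; rewrite -hind; congr Pr; apply/seteqP; split => w; rewrite /Z /=.
      by case=> -> -> ->.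
    by case=> -> [-> ->].
  rewrite -big_distrr /= hunif hb -/c -mulrA; congr (_ * (_ * _)).
  rewrite -(Pr_sum P _ _ hDelta (fun dl => dl tau == [ffun s => tau' (pi s)])).
  have -> : [set w | (fun dl : {ffun table Rr (value Va) -> {ffun Rr -> value Va}} => dl tau == [ffun s => tau' (pi s)]) (Delta w)] = [set w | forall i, (fun i w => Delta w tau i) i w = [ffun s => tau' (pi s)] i].
    apply/seteqP; split => w /=; first by move/eqP => ->.
    by move=> h; apply/eqP/ffunP => i; rewrite h.
  have [hfam hmarg] := hpram tau.
  rewrite hfam /WW; apply: eq_bigr => i _; rewrite hmarg /hh; apply: eq_bigr => a _.
  by rewrite ffunE.
have mN : measurable [set w | ~~ is_bij (Pi w)] := meas_pred _ _ hPi (fun pi => ~~ is_bij pi).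
have hnb : Pr P [set w | ~~ is_bij (Pi w)] = 0.
  rewrite (Pr_sum P _ _ hPi (fun pi => ~~ is_bij pi)); apply: big1 => pi hb.
  by rewrite hunif (negbTE hb).
have hequiv : forall w, is_bij (Pi w) ->
    (T' w = tau' <-> Delta w (T w) == [ffun s => tau' (Pi w s)]).
  move=> w hb; rewrite heq /compPi; split => [->//|/eqP h].
  apply/ffunP => y; have [x <-] := bij_surj hb y.
  by have := congr1 (fun f : {ffun Rr -> value Va} => f x) h; rewrite !ffunE.
have hden : Pr P [set w | T' w = tau'] = Pr P [set w | G predT (Z w)].
  apply: (Pr_eq_off P _ _ _ mN (hT' tau') (meas_pred _ _ hZ (G predT))) => //.
  move=> w /negP; rewrite negbK => hb; rewrite /G /Z /= hb andbT; exact: hequiv.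
have hPr : measurable [set w | Pi w r = r'].
  have -> : [set w | Pi w r = r'] = [set w | (fun pi : {ffun Rr -> Rr'} => pi r == r') (Pi w)].
    by apply/seteqP; split => w /= /eqP.
  exact: (meas_pred _ _ hPi (fun pi : {ffun Rr -> Rr'} => pi r == r')).
have hnum : Pr P ([set w | Pi w r = r'] `&` [set w | T' w = tau']) =
    Pr P [set w | G (fun pi => pi r == r') (Z w)].
  apply: (Pr_eq_off P _ _ _ mN (measurableI _ _ hPr (hT' tau')) (meas_pred _ _ hZ _)) => //.
  move=> w /negP; rewrite negbK => hb; rewrite /G /Z /= hb /=.
  rewrite (hequiv w hb); split; first by case=> -> ->; rewrite eqxx.
  by case/andP => h1 /eqP h2.
rewrite /cPr hnum hden !hcomp.
set k := PRAM_k Rr A.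
have hrho := @rho_ge0 R Att Va A hpos.
have hk : 0 < k.
  rewrite /k /PRAM_k.
  have n1 : 1 <= #|Rr|%:R :> R by rewrite ler1n; apply/card_gt0P; exists r.
  have : 0 <= (#|Rr|%:R - 1) * \prod_a AR (A a) by apply: mulr_ge0 => //; lra.
  lra.
set num := \sum_tau _.
set den := \sum_tau _.
have hc : 0 <= c by rewrite /c invr_ge0 ler0n.
have key : k * num <= den.
  rewrite /num /den mulr_sumr; apply: ler_sum => tau _.
  rewrite mulrCA; apply: ler_wpM2l; first exact: Pr_ge0.
  rewrite -!mulr_sumr mulrCA; apply: ler_wpM2l => //.
  have := @comb_ineq R Rr Rr' r r' (@WW R Rr Rr' Att Va A tau tau') (\prod_a AR (A a))
    (@WW_ge0 R Rr Rr' Att Va A hpos tau tau')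
    (fun pi s _ hs => @WW_swap R Rr Rr' Att Va A hpos tau tau' r pi s hs).
  move=> h; apply: (le_trans h); rewrite le_eqVlt; apply/orP; left; apply/eqP.
  by apply: eq_bigl => pi; case: (is_bij pi).
have hden0 : 0 <= den by rewrite /den -hcomp; exact: Pr_ge0.
have [->|dn0] := eqVneq den 0; first by rewrite invr0 mulr0 invr_ge0 ltW.
have dp : 0 < den by rewrite lt_def dn0.
rewrite ler_pdivrMr // ler_pdivlMl //.
Qed.
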